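(* For every path $\pi$, every message $t$ and all $i,k\in\mathbb{N}$ with $i\le k$: if $\pi(k)$ has $t$, then either $\pi(i)$ is a subterm of $\pi(k)$, or there exists $j\in\mathbb{N}$ with $i\le j<k$ and $\pi(j+1)=\mathrm{ex}(t,\pi(j))$.
   Context: Messages form a set $\mathcal{T}$ (terms of a cryptographic message algebra; only their identity matters here). TPM machine states are the terms of sort $\mathsf{M}$ generated by a constant $\mathrm{bt}$ (boot) and a constructor $\mathrm{ex}:\mathcal{T}\times\mathsf{M}\to\mathsf{M}$ (extend); these are free constructors, so distinct terms are distinct states. The TPM transition relation $\leadsto$ on states is defined by: $m_0\leadsto m_1$ iff $m_1=\mathrm{bt}$, or $m_1=\mathrm{ex}(t,m_0)$ for some message $t$, or $m_0=m_1$. A path is an infinite sequence $\pi:\mathbb{N}\to\mathsf{M}$ with $\pi(0)=\mathrm{bt}$ and $\pi(i)\leadsto\pi(i+1)$ for all $i$. A state $m$ has a message $t$ if some state of the form $\mathrm{ex}(t,m')$ is a subterm of $m$ (e.g. $\mathrm{ex}(\text{obtain},\mathrm{ex}(v,\mathrm{bt}))$ has obtain and $v$ but not refuse). For states, $m$ is a subterm of $m'$ means $m'=\mathrm{ex}(t_1,\mathrm{ex}(t_2,\dots\mathrm{ex}(t_r,m)\dots))$ for some $r\ge 0$ and messages $t_1,\dots,t_r$. *)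

(* Defs.v *)
(* Messages are an arbitrary type T (only identity matters). *)
From Stdlib Require Import Arith Lia.

Inductive state (T : Type) : Type :=
| bt : state T
| ex : T -> state T -> state T.
Arguments bt {T}.
Arguments ex {T} _ _.

Definition step {T : Type} (m0 m1 : state T) : Prop :=
  m1 = bt \/ (exists t, m1 = ex t m0) \/ m0 = m1.

Definition is_path {T : Type} (pi : nat -> state T) : Prop :=
  pi 0 = bt /\ forall i, step (pi i) (pi (i + 1)).

Inductive subterm {T : Type} : state T -> state T -> Prop :=
| subterm_refl : forall m, subterm m m
| subterm_ex : forall m t m', subterm m m' -> subterm m (ex t m').

Definition has_msg {T : Type} (m : state T) (t : T) : Prop :=
  exists m', subterm (ex t m') m.

(* Main.v *)
Require Import Defs.
From Stdlib Require Import Arith Lia.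

Lemma aux (T : Type) (pi : nat -> state T) (t : T) (i d : nat) :
  is_path pi -> has_msg (pi (i + d)) t ->
  subterm (pi i) (pi (i + d)) \/
  (exists j, i <= j /\ j < i + d /\ pi (j + 1) = ex t (pi j)).
Proof.
  intros [H0 Hs]. induction d as [|d IH]; intros Hm.
  - left. rewrite Nat.add_0_r. constructor.
  - replace (i + S d) with (i + d + 1) in * by lia.
    destruct (Hs (i + d)) as [Hb | [[s Hex] | Heq]].
    + exfalso. rewrite Hb in Hm. destruct Hm as [m' Hm']. inversion Hm'.
    + rewrite Hex in Hm |- *. destruct Hm as [m' Hm'].
      inversion Hm'; subst.
      * right. exists (i + d). split; [lia|split; [lia|]]. rewrite Hex. congruence.
      * destruct IH as [IH|[j [Hj1 [Hj2 Hj3]]]].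
        -- exists m'. assumption.
        -- left. constructor. assumption.
        -- right. exists j. repeat split; try lia. exact Hj3.
    + rewrite <- Heq in Hm |- *. destruct (IH Hm) as [IH'|[j [Hj1 [Hj2 Hj3]]]].
      * left. exact IH'.
      * right. exists j. repeat split; try lia. exact Hj3.
Qed.

Theorem lemma1 (T : Type) (pi : nat -> state T) (t : T) (i k : nat) :
  is_path pi -> i <= k -> has_msg (pi k) t ->
  subterm (pi i) (pi k) \/
  (exists j, i <= j /\ j < k /\ pi (j + 1) = ex t (pi j)).
Proof.
  intros Hp Hik Hm. replace k with (i + (k - i)) in * by lia.
  apply aux; assumption.
Qed.
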